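(* Let $S$ be a semigroup or monoid. Then any two loop problems of $S$, taken with respect to finite choices of generators (semigroup choices, or, when $S$ is a monoid, semigroup or monoid choices), are rationally equivalent.
   Context: Maps are written on the right. $X^*$, $X^+$: free monoid and free semigroup on $X$. Let $\overline{X} = \{\overline{x} : x \in X\}$ be new symbols, $\hat{X} = X \cup \overline{X}$. For a monoid $M$ and surjective monoid morphism $\sigma : X^* \to M$, the loop automaton has vertex set $M$, for each $a \in M$, $x \in X$ an edge $a \to a(x\sigma)$ labelled $x$ and an edge $a(x\sigma) \to a$ labelled $\overline{x}$; the loop problem $L_\sigma(M) \subseteq \hat{X}^*$ is the set of labels of paths from the identity to the identity. For a semigroup $S$ (possibly a monoid) and surjective morphism $\sigma : X^+ \to S$, $L_\sigma(S)$ is the loop problem of $S^1$ ($S$ with a new identity adjoined, even if one exists) with respect to the unique extension $X^* \to S^1$. A rational transduction from a finite alphabet $A$ to a finite alphabet $B$ is a relation $\rho \subseteq A^* \times B^*$ accepted by a finite transducer: a finite directed graph with edges labelled in $A^* \times B^*$, an initial vertex and terminal vertices, accepting the componentwise-concatenated labels of initial-to-terminal paths. The image of $L \subseteq A^*$ is $L\rho = \{v : (u,v) \in \rho \text{ for some } u \in L\}$. Two languages are rationally equivalent if each is the image of the other under some rational transduction. *)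

(* Defs.v *)
From mathcomp Require Import all_boot.
Set Implicit Arguments. Unset Strict Implicit. Unset Printing Implicit Defensive.

(* Words over hat X = X ∪ X̄ are [seq (X + X)]: [inl x] is the letter x,
   [inr x] is the letter x̄. *)

Section Loop.
Variables (M : Type) (mul : M -> M -> M) (X : Type) (g : X -> M).

(* [lpath m w m']: w labels a path from m to m' in the loop automaton of
   (M, g): an edge a -> a*(g x) labelled x and an edge a*(g x) -> a
   labelled x̄. *)
Fixpoint lpath (m : M) (w : seq (X + X)) (m' : M) : Prop :=
  match w with
  | [::] => m = m'
  | inl x :: w' => lpath (mul m (g x)) w' m'
  | inr x :: w' => exists m0, mul m0 (g x) = m /\ lpath m0 w' m'
  end.

Definition loop_language (one : M) (w : seq (X + X)) : Prop := lpath one w one.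
End Loop.

Definition adj1_mul (S : Type) (op : S -> S -> S) (a b : option S) : option S :=
  match a, b with
  | None, _ => b
  | _, None => a
  | Some x, Some y => Some (op x y)
  end.

(* Semigroup choice: f : X -> S such that the induced X^+ -> S is surjective. *)
Definition sg_generates (S : Type) (op : S -> S -> S) (X : Type) (f : X -> S) : Prop :=
  forall s : S, exists (x : X) (w : seq X),
    s = foldl (fun acc y => op acc (f y)) (f x) w.

(* Monoid choice: f : X -> S such that the induced X^* -> S is surjective
   (empty word maps to the identity e). *)
Definition mon_generates (S : Type) (op : S -> S -> S) (e : S) (X : Type) (f : X -> S) : Prop :=
  forall s : S, exists w : seq X, s = foldl (fun acc y => op acc (f y)) e w.

Definition loop_problem_sg (S : Type) (op : S -> S -> S) (X : Type) (f : X -> S)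
  : seq (X + X) -> Prop :=
  loop_language (adj1_mul op) (fun x => Some (f x)) None.

Definition loop_problem_mon (S : Type) (op : S -> S -> S) (e : S) (X : Type) (f : X -> S)
  : seq (X + X) -> Prop :=
  loop_language op f e.

(* L is a loop problem of S w.r.t. some finite choice of generators X:
   a semigroup choice, or (when S is a monoid with identity e, i.e. oe = Some e)
   a monoid choice. *)
Definition is_loop_problem (S : Type) (op : S -> S -> S) (oe : option S)
  (X : finType) (L : seq (X + X) -> Prop) : Prop :=
  (exists f : X -> S, sg_generates op f /\ forall w, L w <-> loop_problem_sg op f w)
  \/ (exists e : S, oe = Some e /\
        exists f : X -> S, mon_generates op e f /\
          forall w, L w <-> loop_problem_mon op e f w).

Record transducer (A B : eqType) := Transducer {
  tn : nat;
  tinit : 'I_tn;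
  tfinal : pred 'I_tn;
  tedges : seq ('I_tn * seq A * seq B * 'I_tn)
}.

Inductive tpath (A B : eqType) (T : transducer A B) : 'I_(tn T) -> seq A -> seq B -> Prop :=
  | tpath_end (q : 'I_(tn T)) : @tfinal _ _ T q -> tpath q [::] [::]
  | tpath_step (q : 'I_(tn T)) u v (q' : 'I_(tn T)) u' v' :
      (q, u, v, q') \in tedges T -> tpath q' u' v' -> tpath q (u ++ u') (v ++ v').
Arguments tpath {A B} T _ _ _.

Definition taccepts (A B : eqType) (T : transducer A B) (u : seq A) (v : seq B) : Prop :=
  tpath T (tinit T) u v.

Definition rat_image (A B : eqType) (L1 : seq A -> Prop) (L2 : seq B -> Prop) : Prop :=
  exists T : transducer A B, forall v, L2 v <-> exists u, L1 u /\ taccepts T u v.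

Definition rat_equiv (A B : eqType) (L1 : seq A -> Prop) (L2 : seq B -> Prop) : Prop :=
  rat_image L1 L2 /\ rat_image L2 L1.

(* Main.v *)
Require Import Defs.
From mathcomp Require Import all_boot.
From Stdlib Require Import IndefiniteDescription.
Set Implicit Arguments. Unset Strict Implicit. Unset Printing Implicit Defensive.

Lemma fchoice' (A B : Type) (P : A -> B -> Prop) :
  (forall a, exists b, P a b) -> exists f, forall a, P a (f a).
Proof.
move=> H. exists (fun a => proj1_sig (constructive_indefinite_description _ (H a))).
move=> a. exact: (proj2_sig (constructive_indefinite_description _ (H a))).
Qed.

Definition run (M X : Type) (mul : M -> M -> M) (g : X -> M) (m : M) (ws : seq X) :=
  foldl (fun a x => mul a (g x)) m ws.

Definition phiW (X1 X2 : Type) (W : X2 -> seq X1) (a : X2 + X2) : seq (X1 + X1) :=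
  match a with inl y => map inl (W y) | inr y => rev (map inr (W y)) end.

Definition Phi (A B : Type) (phi : B -> seq A) (v : seq B) := flatten (map phi v).

Section Gen.
Variables (M : Type) (mul : M -> M -> M).

Lemma lpath_cat X (g : X -> M) u v m m' :
  lpath mul g m (u ++ v) m' <-> exists m1, lpath mul g m u m1 /\ lpath mul g m1 v m'.
Proof.
elim: u m => [|[x|x] u IH] m /=.
- split; [move=> H; exists m; done | by case=> m1 [-> H]].
- exact: IH.
- split.
  + case=> m0 [E H]; have [m1 [H1 H2]] := (IH m0).1 H. exists m1; split=> //; exists m0; done.
  + case=> m1 [[m0 [E H1]] H2]. exists m0; split=> //. apply/(IH m0).2. by exists m1.
Qed.

Lemma lpath_fwd X (g : X -> M) ws m m' :
  lpath mul g m (map inl ws) m' <-> m' = run mul g m ws.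
Proof. elim: ws m => [|x ws IH] m /=; [by split=> ->| exact: IH]. Qed.

Lemma lpath_bwd X (g : X -> M) ws m m' :
  lpath mul g m (rev (map inr ws)) m' <-> m = run mul g m' ws.
Proof.
elim/last_ind: ws m => [|ws x IH] m /=.
- by split=> ->.
- rewrite map_rcons rev_rcons /= /run foldl_rcons.
  split.
  + case=> m0 [<- H]. by move/(IH m0): H => ->.
  + move=> ->. eexists; split; first reflexivity. exact/(IH _).2.
Qed.

Lemma lpath_hom X1 X2 (g1 : X1 -> M) (g2 : X2 -> M) (W : X2 -> seq X1)
  (HW : forall m y, mul m (g2 y) = run mul g1 m (W y)) :
  forall v m m', lpath mul g2 m v m' <-> lpath mul g1 m (Phi (phiW W) v) m'.
Proof.
elim=> [|[y|y] v IH] m m' /=; first by [].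
- rewrite /Phi /= -/(Phi _ _) lpath_cat. split.
  + move=> H. exists (mul m (g2 y)); split; first by apply/lpath_fwd.
    exact/IH.
  + case=> m1 [/lpath_fwd E H]. rewrite HW -E. exact/IH.
- rewrite /Phi /= -/(Phi _ _) lpath_cat. split.
  + case=> m0 [E H]. exists m0; split; first by apply/lpath_bwd; rewrite -HW.
    exact/IH.
  + case=> m1 [/lpath_bwd E H]. exists m1; split; first by rewrite HW.
    exact/IH.
Qed.
End Gen.
Definition s0 : 'I_3 := @Ordinal 3 0 isT.
Definition s1 : 'I_3 := @Ordinal 3 1 isT.
Definition s2 : 'I_3 := @Ordinal 3 2 isT.

Lemma tstep (A B : eqType) (T : transducer A B) q u v q' u' v' U V :
  (q, u, v, q') \in tedges T -> tpath T q' u' v' -> U = u ++ u' -> V = v ++ v' ->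
  tpath T q U V.
Proof. move=> e H -> ->; exact: tpath_step e H. Qed.

Section T1.
Variables (A : eqType) (B : finType) (pre post : seq A) (phi : B -> seq A).

Definition T1 : transducer A B :=
  @Transducer A B 3 s0 (pred1 s2)
   ((s0, pre, [::], s1) :: (s1, post, [::], s2) :: [seq (s1, phi b, [:: b], s1) | b <- enum B]).

Definition T1spec (q : 'I_3) u v := match val q with
  | 0 => u = pre ++ Phi phi v ++ post
  | 1 => u = Phi phi v ++ post
  | _ => u = [::] /\ v = [::] end.

Lemma T1_fwd q u v : tpath T1 q u v -> T1spec q u v.
Proof.
elim=> [q0 /eqP -> //|q0 u0 v0 q1 u1 v1 e _ IH].
move: e; rewrite /= !inE => /orP [/eqP [-> -> -> E]|/orP [/eqP [-> -> -> E]|]].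
- by move: IH; rewrite E /T1spec /= => ->.
- by move: IH; rewrite E /T1spec /= => [[-> ->]]; rewrite cats0.
- case/mapP=> b _ [-> -> -> E]. by move: IH; rewrite E /T1spec /= => ->; rewrite catA.
Qed.

Lemma T1_s1 v : tpath T1 s1 (Phi phi v ++ post) v.
Proof.
elim: v => [|b v IH].
- apply: (@tstep _ _ T1 _ post [::] s2 [::] [::]); rewrite ?cats0 //.
  + by rewrite !inE eqxx orbT.
  + by apply: tpath_end.
- apply: (@tstep _ _ T1 s1 (phi b) [:: b] s1 _ _ _ _ _ IH); last by [].
  + by rewrite !inE; apply/orP; right; apply/orP; right; apply/mapP; exists b; rewrite ?mem_enum.
  + by rewrite /Phi /= catA.
Qed.

Lemma T1_acc u v : taccepts T1 u v <-> u = pre ++ Phi phi v ++ post.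
Proof.
split; first by move/T1_fwd.
move=> ->. apply: (@tstep _ _ T1 s0 pre [::] s1 _ _ _ _ _ (T1_s1 v)) => //. by rewrite !inE eqxx.
Qed.
End T1.

Lemma image_T1 (A : eqType) (B : finType) (pre post : seq A) (phi : B -> seq A)
  (L1 : seq A -> Prop) (L2 : seq B -> Prop) :
  (forall v, L2 v <-> L1 (pre ++ Phi phi v ++ post)) -> rat_image L1 L2.
Proof.
move=> H. exists (T1 pre post phi) => v. rewrite H. split.
- move=> h; eexists; split; first exact: h. exact/T1_acc.
- by case=> u [h /T1_acc <-].
Qed.

Section T2.
Variables (A : eqType) (X : finType) (phi : X + X -> seq A).

Definition T2 : transducer A (X + X)%type :=
  @Transducer A _ 3 s0 (fun q => (q == s0) || (q == s2))
   ([seq (s0, phi (inl x), [:: inl x], s1) | x <- enum X] ++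
    [seq (s1, phi b, [:: b], s1) | b <- enum {: (X + X)%type}] ++
    [seq (s1, phi (inr x), [:: inr x], s2) | x <- enum X]).

Definition T2spec (q : 'I_3) u v := match val q with
  | 0 => (u = [::] /\ v = [::]) \/ exists x v1 y, v = inl x :: rcons v1 (inr y) /\ u = Phi phi v
  | 1 => exists v1 y, v = rcons v1 (inr y) /\ u = Phi phi v
  | _ => u = [::] /\ v = [::] end.

Lemma T2_fwd q u v : tpath T2 q u v -> T2spec q u v.
Proof.
elim=> [q0 /orP [/eqP ->|/eqP ->]|q0 u0 v0 q1 u1 v1 e _ IH]; rewrite /T2spec /=; [by left| by []|].
move: e; rewrite /= !mem_cat => /orP [|/orP []] /mapP.
- case=> x _ [-> -> -> E]; move: IH; rewrite E /T2spec /= => [[v2 [y [-> ->]]]].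
  by right; exists x, v2, y.
- case=> b _ [-> -> -> E]; move: IH; rewrite E /T2spec /= => [[v2 [y [-> ->]]]].
  by exists (b :: v2), y.
- case=> x _ [-> -> -> E]; move: IH; rewrite E /T2spec /= => [[-> ->]].
  by exists [::], x; rewrite /Phi /=.
Qed.

Lemma T2_s1 v1 y : tpath T2 s1 (Phi phi (rcons v1 (inr y))) (rcons v1 (inr y)).
Proof.
elim: v1 => [|b v IH].
- apply: (@tstep _ _ T2 _ (phi (inr y)) [:: inr y] s2 [::] [::]); rewrite ?cats0 //.
  + by rewrite !mem_cat; apply/orP; right; apply/orP; right; apply/mapP; exists y; rewrite ?mem_enum.
  + by apply: tpath_end.
  + by rewrite /Phi /= cats0.
- apply: (@tstep _ _ T2 s1 (phi b) [:: b] s1 _ _ _ _ _ IH); last by [].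
  + by rewrite !mem_cat; apply/orP; right; apply/orP; left; apply/mapP; exists b; rewrite ?mem_enum.
  + by [].
Qed.

Lemma T2_acc u v : taccepts T2 u v <->
  ((u = [::] /\ v = [::]) \/ exists x v1 y, v = inl x :: rcons v1 (inr y) /\ u = Phi phi v).
Proof.
split; first by move/T2_fwd.
case=> [[-> ->]|[x [v1 [y [-> ->]]]]]; first by apply: tpath_end; rewrite /=.
apply: (@tstep _ _ T2 s0 (phi (inl x)) [:: inl x] s1 _ _ _ _ _ (T2_s1 v1 y)) => //.
by rewrite !mem_cat; apply/orP; left; apply/mapP; exists x; rewrite ?mem_enum.
Qed.
End T2.

Lemma image_T2 (A : eqType) (X : finType) (phi : X + X -> seq A)
  (L1 : seq A -> Prop) (L2 : seq (X + X)%type -> Prop) :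
  (forall v, L2 v <-> (v = [::] \/ exists x v1 y, v = inl x :: rcons v1 (inr y)) /\ L1 (Phi phi v)) ->
  rat_image L1 L2.
Proof.
move=> H. exists (T2 phi) => v. rewrite H. split.
- case=> [[->|[x [v1 [y ->]]]] h]; eexists; (split; first exact: h); apply/T2_acc.
  + by left.
  + by right; exists x, v1, y.
- case=> u [h /T2_acc [[Eu ->]|[x [v1 [y [-> Eu]]]]]]; subst u.
  + by split; [left|].
  + by split=> //; right; exists x, v1, y.
Qed.
Section Semi.
Variables (S : Type) (op : S -> S -> S).
Hypothesis op_assoc : forall a b c, op a (op b c) = op (op a b) c.

Lemma run_assoc X (f : X -> S) m a w : op m (run op f a w) = run op f (op m a) w.
Proof. elim: w a => [|y w IH] a //=. by rewrite IH op_assoc. Qed.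

Lemma run_some X (f : X -> S) a w :
  run (adj1_mul op) (fun x => Some (f x)) (Some a) w = Some (run op f a w).
Proof. elim: w a => [|y w IH] a //=. Qed.

Lemma gw_sg X (f : X -> S) : sg_generates op f -> forall s, exists w : seq X,
  (forall m, adj1_mul op m (Some s) = run (adj1_mul op) (fun x => Some (f x)) m w) /\
  (forall m, op m s = run op f m w).
Proof.
move=> H s. have [x [w ->]] := H s. exists (x :: w). split.
- case=> [m|] /=; rewrite run_some //. by rewrite -run_assoc.
- move=> m /=. exact: run_assoc.
Qed.

Lemma gw_mon X (f : X -> S) e : (forall a, op a e = a) -> mon_generates op e f -> forall s, exists w : seq X,
  (forall m, op m s = run op f m w).
Proof.
move=> He H s. have [w ->] := H s. exists w => m. by rewrite run_assoc He.
Qed.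

Lemma embed X (f : X -> S) w : forall m m', lpath op f m w m' ->
  lpath (adj1_mul op) (fun x => Some (f x)) (Some m) w (Some m').
Proof.
elim: w => [|[x|x] w IH] m m' /=; first by move->.
- exact: IH.
- case=> m0 [E H]. exists (Some m0); split; [by rewrite /= E | exact: IH].
Qed.

Lemma proj X (f : X -> S) e (He : forall x, op e (f x) = f x) w : forall a b,
  lpath (adj1_mul op) (fun x => Some (f x)) a w b ->
  lpath op f (odflt e a) w (odflt e b).
Proof.
have K : forall a x, odflt e (adj1_mul op a (Some (f x))) = op (odflt e a) (f x).
  by case=> [a|] x /=; rewrite ?He.
elim: w => [|[x|x] w IH] a b /=; first by move->.
- move/IH. by rewrite K.
- case=> m0 [E H]. exists (odflt e m0); split; [by rewrite -E K | exact: IH].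
Qed.
End Semi.

Section Main.
Variables (S : Type) (op : S -> S -> S).
Hypothesis op_assoc : forall a b c, op a (op b c) = op (op a b) c.

Lemma case_same (M : Type) (mul : M -> M -> M) (one : M) (X1 X2 : finType)
  (g1 : X1 -> M) (g2 : X2 -> M) (L1 : seq (X1 + X1)%type -> Prop) (L2 : seq (X2 + X2)%type -> Prop) :
  (forall y, exists w, forall m, mul m (g2 y) = run mul g1 m w) ->
  (forall w, L1 w <-> loop_language mul g1 one w) ->
  (forall w, L2 w <-> loop_language mul g2 one w) -> rat_image L1 L2.
Proof.
move=> HW H1 H2. have [W HWW] := fchoice' HW.
apply: (@image_T1 _ _ [::] [::] (phiW W)) => v.
by rewrite cats0 /= H1 H2 /loop_language (lpath_hom (fun m y => HWW y m)).
Qed.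

Lemma case_sg_mon (e : S) (He : forall a, op e a = a /\ op a e = a) (X1 X2 : finType)
  (f1 : X1 -> S) (f2 : X2 -> S) (L1 : seq (X1 + X1)%type -> Prop) (L2 : seq (X2 + X2)%type -> Prop) :
  sg_generates op f1 ->
  (forall w, L1 w <-> loop_problem_sg op f1 w) ->
  (forall w, L2 w <-> loop_problem_mon op e f2 w) -> rat_image L1 L2.
Proof.
move=> G H1 H2.
have HW : forall y, exists w, forall m, op m (f2 y) = run op f1 m w.
  move=> y. have [w [_ Hw]] := gw_sg op_assoc G (f2 y). by exists w.
have [W HWW] := fchoice' HW.
have [z [Hz _]] := gw_sg op_assoc G e.
have Hz' : run (adj1_mul op) (fun x => Some (f1 x)) None z = Some e by rewrite -Hz.
apply: (@image_T1 _ _ (map inl z) (rev (map inr z)) (phiW W)) => v.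
rewrite H1 H2 /loop_problem_mon /loop_problem_sg /loop_language (lpath_hom (fun m y => HWW y m)).
rewrite lpath_cat. split.
- move=> h. exists (Some e); split; first exact/lpath_fwd.
  rewrite lpath_cat. exists (Some e); split; first exact: embed.
  exact/lpath_bwd.
- case=> m1 [/lpath_fwd E1]. rewrite lpath_cat => [[m2 [h /lpath_bwd E2]]].
  rewrite Hz' in E1 E2. subst m1 m2.
  have := proj (fun x => (He (f1 x)).1) h. done.
Qed.

Lemma case_mon_sg (e : S) (He : forall a, op e a = a /\ op a e = a) (X1 X2 : finType)
  (f1 : X1 -> S) (f2 : X2 -> S) (L1 : seq (X1 + X1)%type -> Prop) (L2 : seq (X2 + X2)%type -> Prop) :
  mon_generates op e f1 ->
  (forall w, L1 w <-> loop_problem_mon op e f1 w) ->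
  (forall w, L2 w <-> loop_problem_sg op f2 w) -> rat_image L1 L2.
Proof.
move=> G H1 H2.
have HW : forall y, exists w, forall m, op m (f2 y) = run op f1 m w.
  move=> y. exact: (gw_mon op_assoc (fun a => (He a).2) G (f2 y)).
have [W HWW] := fchoice' HW.
apply: (@image_T2 _ _ (phiW W)) => v.
rewrite H1 H2 /loop_problem_mon /loop_problem_sg /loop_language -(lpath_hom (fun m y => HWW y m)).
split.
- move=> h. split; last first.
    by have := proj (fun x => (He (f2 x)).1) h.
  case: v h => [|[x|x] v] h; [by left| |by case: h => [[?|] []]].
  right. case/lastP: v h => [|v b] h; first by [].
  move: h; rewrite -rcons_cons -cats1 lpath_cat => [[m1 [_]]].
  case: b => [y|y] /= h; first by case: m1 h.
  by exists x, v, y; rewrite cats1.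
- case=> [[->|[x [v1 [y ->]]]] h] //=.
  move: h => /=. rewrite -cats1 lpath_cat => [[m1 [h1 [m0 [E h0]]]]].
  simpl in h0. subst m0. rewrite (He _).1 in E. subst m1.
  rewrite lpath_cat. exists (Some (f2 y)); split.
  + apply: embed. by rewrite -(He (f2 x)).1.
  + by exists None.
Qed.
End Main.

Lemma main_dir (S : Type) (op : S -> S -> S)
  (op_assoc : forall a b c, op a (op b c) = op (op a b) c)
  (oe : option S)
  (oe_id : forall e, oe = Some e -> forall a, op e a = a /\ op a e = a)
  (X1 X2 : finType) (L1 : seq (X1 + X1)%type -> Prop) (L2 : seq (X2 + X2)%type -> Prop) :
  is_loop_problem op oe L1 -> is_loop_problem op oe L2 -> rat_image L1 L2.
Proof.
case=> [[f1 [G1 H1]]|[e [Ee [f1 [G1 H1]]]]] [[f2 [G2 H2]]|[e' [Ee' [f2 [G2 H2]]]]].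
- apply: (@case_same (option S) (adj1_mul op) None _ _ (fun x => Some (f1 x)) (fun x => Some (f2 x))) => //.
  move=> y. have [w [Hw _]] := gw_sg op_assoc G1 (f2 y). by exists w.
- exact: (case_sg_mon op_assoc (oe_id _ Ee') G1 H1 H2).
- exact: (case_mon_sg op_assoc (oe_id _ Ee) G1 H1 H2).
- have E : e' = e by move: Ee'; rewrite Ee => [[]].
  subst e'.
  apply: (@case_same S op e _ _ f1 f2) => //.
  move=> y. exact: (gw_mon op_assoc (fun a => (oe_id _ Ee a).2) G1 (f2 y)).
Qed.

(* S is a semigroup (op associative); oe = None: S considered as a semigroup,
   oe = Some e: S is a monoid with identity e. *)
Theorem corollary4p8 (S : Type) (op : S -> S -> S)
  (op_assoc : forall a b c, op a (op b c) = op (op a b) c)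
  (oe : option S)
  (oe_id : forall e, oe = Some e -> forall a, op e a = a /\ op a e = a)
  (X1 X2 : finType) (L1 : seq (X1 + X1) -> Prop) (L2 : seq (X2 + X2) -> Prop) :
  is_loop_problem op oe L1 -> is_loop_problem op oe L2 -> rat_equiv L1 L2.
Proof.
move=> P1 P2. split; [exact: (main_dir op_assoc oe_id P1 P2)|exact: (main_dir op_assoc oe_id P2 P1)].
Qed.
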